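(* Let $K$ be a valued field and $d\ge 1$. Then the VC-dimension of $\operatorname{Conv}_{K^d}$ is exactly $d+1$: some subset of $K^d$ of size $d+1$ is shattered by $\operatorname{Conv}_{K^d}$, and no subset of size $d+2$ is.
   Context: $K$ is a field with valuation $\nu$ and valuation ring $\mathcal{O}=\{x:\nu(x)\ge0\}$. A set $X\subseteq K^d$ is convex if it is closed under combinations $\sum_{i=1}^n\alpha_ix_i$ with $x_i\in X$, $\alpha_i\in\mathcal{O}$, $\sum\alpha_i=1$; $\operatorname{Conv}_{K^d}$ is the family of all convex subsets of $K^d$. A family $\mathcal{F}\subseteq\mathcal{P}(X)$ shatters $Y\subseteq X$ if $\{S\cap Y:S\in\mathcal{F}\}=\mathcal{P}(Y)$; the VC-dimension of $\mathcal{F}$ is the largest $k$ such that $\mathcal{F}$ shatters some $k$-element set (or $\infty$). *)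

(* Defs.v *)
From mathcomp Require Import all_boot all_order all_algebra.
Set Implicit Arguments. Unset Strict Implicit. Unset Printing Implicit Defensive.
Import GRing.Theory.
Local Open Scope ring_scope.

(* A (Krull) valuation nu : K -> Gamma u {oo}, Gamma a totally ordered abelian
   group (zmodType G with a total order [le] compatible with addition).
   The value oo is encoded as [None]. *)

Definition ordered_group (G : zmodType) (le : rel G) : Prop :=
  [/\ reflexive le, antisymmetric le, transitive le, total le &
      forall a b c : G, le a b -> le (a + c) (b + c)].

Definition vle (G : zmodType) (le : rel G) (x y : option G) : bool :=
  match x, y with
  | _, None => true
  | None, Some _ => false
  | Some a, Some b => le a b
  end.

Definition vadd (G : zmodType) (x y : option G) : option G :=
  match x, y with
  | Some a, Some b => Some (a + b)
  | _, _ => None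
  end.

Definition is_valuation (K : fieldType) (G : zmodType) (le : rel G)
    (nu : K -> option G) : Prop :=
  [/\ forall x, nu x = None <-> x = 0,
      forall x y, nu (x * y) = vadd (nu x) (nu y) &
      forall x y, vle le (nu x) (nu (x + y)) || vle le (nu y) (nu (x + y))].
  (* the last axiom is nu(x+y) >= min(nu x, nu y) *)

Definition val_ring (K : fieldType) (G : zmodType) (le : rel G)
    (nu : K -> option G) (a : K) : Prop := vle le (Some 0) (nu a).

Definition convex (K : fieldType) (G : zmodType) (le : rel G)
    (nu : K -> option G) (d : nat) (X : 'rV[K]_d -> Prop) : Prop :=
  forall (n : nat) (x : 'I_n -> 'rV[K]_d) (alpha : 'I_n -> K),
    (forall i, X (x i)) -> (forall i, val_ring le nu (alpha i)) ->
    \sum_(i < n) alpha i = 1 ->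
    X (\sum_(i < n) alpha i *: x i).

Definition Conv (K : fieldType) (G : zmodType) (le : rel G)
    (nu : K -> option G) (d : nat) : ('rV[K]_d -> Prop) -> Prop :=
  fun X => @convex K G le nu d X.
Arguments Conv {K G} le nu d _.

Definition shatters (T : eqType) (F : (T -> Prop) -> Prop) (Y : seq T) : Prop :=
  forall Z : T -> Prop, (forall y, Z y -> y \in Y) ->
    exists S, F S /\ forall y, y \in Y -> (S y <-> Z y).

Definition VC_dim_eq (T : eqType) (F : (T -> Prop) -> Prop) (k : nat) : Prop :=
  (exists Y : seq T, uniq Y /\ size Y = k /\ shatters F Y) /\
  (forall Y : seq T, uniq Y -> shatters F Y -> (size Y <= k)%N).

(* Main.v *)
Require Import Defs.
From mathcomp Require Import all_boot all_order all_algebra.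
From Stdlib Require Import Classical.
Set Implicit Arguments. Unset Strict Implicit. Unset Printing Implicit Defensive.
Import GRing.Theory.
Local Open Scope ring_scope.

Section Val.
Variables (K : fieldType) (G : zmodType) (le : rel G).
Hypothesis hG : ordered_group le.
Variable nu : K -> option G.
Hypothesis hnu : is_valuation le nu.

Lemma nu_Some x : x != 0 -> exists g, nu x = Some g.
Proof.
case: hnu => h0 _ _ nx; case E: (nu x) => [g|]; first by exists g.
by move/h0: E => /eqP; rewrite (negbTE nx).
Qed.

Lemma nu1 : nu 1 = Some 0.
Proof.
case: hnu => h0 hm _.
have [g Hg] := nu_Some (oner_neq0 K).
have := hm 1 1; rewrite mulr1 Hg /= => -[E].
have : g + g - g = g - g by rewrite -E.
by rewrite addrK subrr => ->.
Qed.

Lemma nuN1 : nu (-1) = Some 0.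
Proof.
case: hnu => h0 hm _.
have n1 : (-1 : K) != 0 by rewrite oppr_eq0 oner_neq0.
have [h Hh] := nu_Some n1.
have := hm (-1) (-1); rewrite mulrNN mulr1 nu1 Hh /= => -[E].
case: hG => refl anti trans tot comp.
suff -> : h = 0 by [].
apply: anti.
case/orP: (tot h 0) => H.
- rewrite H /=; have := comp h 0 h H; by rewrite add0r -E.
- rewrite H andbT; have := comp 0 h h H; by rewrite add0r -E.
Qed.


Lemma ex_min (T : eqType) (r : rel T) :
  total r -> transitive r ->
  forall (s : seq T) x0, exists2 k, k \in x0 :: s & forall i, i \in x0 :: s -> r k i.
Proof.
move=> tot tr; elim=> [|y s IH] x0.
  exists x0; first by rewrite inE.
  by move=> i; rewrite inE => /eqP ->; case/orP: (tot x0 x0).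
have [k Hk Hmin] := IH y.
case/orP: (tot x0 k) => H.
- exists x0; first by rewrite inE eqxx.
  move=> i; rewrite inE => /orP[/eqP ->|Hi]; first by case/orP: (tot x0 x0).
  exact: tr H (Hmin i Hi).
- exists k; first by rewrite inE Hk orbT.
  by move=> i; rewrite inE => /orP[/eqP ->|Hi] //; exact: Hmin.
Qed.

Lemma aff_dep (d : nat) (x : 'I_d.+2 -> 'rV[K]_d) :
  exists v : 'I_d.+2 -> K, (exists i, v i != 0) /\
    \sum_i v i *: x i = 0 /\ \sum_i v i = 0.
Proof.
pose X := \matrix_(i, j) x i 0 j.
pose M := row_mx X (const_mx 1 : 'M[K]_(d.+2, 1)).
have Hk : kermx M != 0.
  rewrite kermx_eq0 /row_free; apply/negP => /eqP E.
  by have := rank_leq_col M; rewrite E addn1 ltnn.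
have [i Hi] : exists i, row i (kermx M) != 0.
  apply/not_all_not_ex => H; move/negP: Hk; apply; apply/eqP/row_matrixP => i.
  rewrite row0; apply/eqP/negPn/negP; exact: (H i).
pose v := row i (kermx M).
have Hv : v *m M = 0 by rewrite /v -row_mul mulmx_ker row0.
move: Hv; rewrite mul_mx_row -row_mx0 => /eq_row_mx [H1 H2].
exists (fun j => v 0 j); split; [|split].
- apply/not_all_not_ex => H; move/negP: Hi; apply; apply/eqP/rowP => j.
  rewrite [LHS]mxE [RHS]mxE; have := H j; rewrite /v [X in X != 0]mxE; by case: eqP.
- rewrite -[RHS]H1 mulmx_sum_row; apply: eq_bigr => j _; congr (_ *: _).
  by apply/rowP => k; rewrite !mxE.
- have := congr1 (fun A : 'M_1 => A 0 0) H2; rewrite /= [X in X = _ -> _]mxE [X in _ = X -> _]mxE => E.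
  rewrite -[RHS]E; apply: eq_bigr => j _; by rewrite [const_mx _ _ _]mxE mulr1.
Qed.

Lemma upper d (Y : seq 'rV[K]_d) : uniq Y -> (d.+2 <= size Y)%N ->
  ~ shatters (Conv le nu d) Y.
Proof.
move=> uY hs Hsh.
case: (hG) => refl anti trans tot comp.
case: (hnu) => h0 hm _.
pose x (i : 'I_d.+2) := nth 0 Y i.
have xY i : x i \in Y by apply: mem_nth; exact: leq_trans (ltn_ord i) hs.
have xinj i j : (x i == x j) = (i == j).
  by rewrite nth_uniq // ?(leq_trans (ltn_ord _) hs).
have [v [[i0 Hi0] [Hsum Hs0]]] := aff_dep x.
pose r := fun i j => vle le (nu (v i)) (nu (v j)).
have rtot : total r.
  move=> i j; rewrite /r; case: (nu (v i)) => [a|]; case: (nu (v j)) => [b|] //=.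
have rtr : transitive r.
  move=> j i l; rewrite /r; case: (nu (v i)) => [a|]; case: (nu (v j)) => [b|];
    case: (nu (v l)) => [c|] //=; exact: trans.
have [k _ Hk] := ex_min rtot rtr (enum 'I_d.+2) ord0.
have Hmin i : r k i by apply: Hk; rewrite inE mem_enum orbT.
have vk : v k != 0.
  apply/eqP => E; have := Hmin i0; rewrite /r E (proj2 (h0 0) erefl).
  by have [g ->] := nu_Some Hi0.
pose k' := (if k == ord0 then ord_max else ord0) : 'I_d.+2.
have kk' : k' != k.
  by rewrite /k'; case: (k =P ord0) => [->|/eqP]; [done | rewrite eq_sym].
pose c i := if i == k then 0 else - v i / v k.
pose y i := if i == k then x k' else x i.
pose Z := fun z => z \in Y /\ z != x k.
have [S [HS HSZ]] := Hsh Z (fun z h => proj1 h).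
have Sy i : S (y i).
  rewrite /y; case: eqP => [_|/eqP ne]; apply/(HSZ _ (xY _)); split => //;
    by rewrite xinj.
have Hc i : val_ring le nu (c i).
  rewrite /c; case: eqP => _; first by rewrite /val_ring (proj2 (h0 0) erefl).
  rewrite mulNr -mulrN /val_ring hm.
  have [g Hg] := nu_Some vk.
  have Hm : vadd (Some g) (nu (-(v k)^-1)) = Some 0.
    by rewrite -Hg -hm mulrN divff // nuN1.
  case E: (nu (-(v k)^-1)) Hm => [m|] //= [Hm].
  have := Hmin i; rewrite /r Hg; case: (nu (v i)) => [a|] //= Ha.
  by have := comp g a m Ha; rewrite Hm.
have Es : \sum_(i | i != k) v i = - v k.
  move: Hs0; rewrite (bigD1 k) //= => Hs0.
  by apply/eqP; rewrite -addr_eq0 addrC Hs0.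
have Ex : \sum_(i | i != k) v i *: x i = - (v k *: x k).
  move: Hsum; rewrite (bigD1 k) //= => Hs1.
  by apply/eqP; rewrite -addr_eq0 addrC Hs1.
have Hc1 : \sum_i c i = 1.
  rewrite (bigD1 k) //= /c eqxx add0r.
  rewrite (eq_bigr (fun i => - v i / v k)); last by move=> i /negbTE ->.
  by rewrite -mulr_suml sumrN Es opprK divff.
have Hcomb : \sum_i c i *: y i = x k.
  rewrite (bigD1 k) //= /c /y eqxx scale0r add0r.
  rewrite (eq_bigr (fun i => (- (v k)^-1) *: (v i *: x i))); last first.
    move=> i /negbTE ->; rewrite scalerA; congr (_ *: _).
    by rewrite !mulNr mulrC.
  by rewrite -scaler_sumr Ex scaleNr scalerN opprK scalerA mulVf // scale1r.
have := HS _ y c Sy Hc Hc1; rewrite Hcomb => /(HSZ _ (xY k)) [_].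
by rewrite eqxx.
Qed.

Lemma lower d : exists Y : seq 'rV[K]_d,
  uniq Y /\ size Y = d.+1 /\ shatters (Conv le nu d) Y.
Proof.
pose e (j : 'I_d) : 'rV[K]_d := delta_mx 0 j.
exists (0 :: map e (enum 'I_d)); split; [|split].
- rewrite /= map_inj_uniq ?enum_uniq ?andbT.
    apply/mapP => -[j _ E]; have := congr1 (fun A : 'rV_d => A 0 j) E.
    by rewrite !mxE !eqxx /= => /eqP; rewrite eq_sym oner_eq0.
  move=> i j E; have := congr1 (fun A : 'rV_d => A 0 j) E.
  rewrite !mxE !eqxx /=; case: eqP => // _ /eqP; by rewrite eq_sym oner_eq0.
- by rewrite /= size_map size_enum_ord.
move=> Z _.
exists (fun x : 'rV_d => (forall j, ~ Z (e j) -> x 0 j = 0) /\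
                        (~ Z 0 -> \sum_j x 0 j = 1)); split.
- move=> n xs al HS _ Hal; split.
  + move=> j nZ; rewrite summxE; apply: big1 => i _.
    by rewrite mxE (proj1 (HS i) j nZ) mulr0.
  + move=> nZ; under eq_bigr => j _ do rewrite summxE.
    rewrite exchange_big /= -Hal; apply: eq_bigr => i _.
    rewrite -[RHS]mulr1 -(proj2 (HS i) nZ) mulr_sumr; apply: eq_bigr => j _.
    by rewrite mxE.
- move=> y; rewrite inE => /orP [/eqP -> | /mapP [j _ ->]].
  + split.
    * case=> _ H; apply: NNPP => nZ; have := H nZ.
      rewrite big1 => [/eqP|j _]; [by rewrite eq_sym oner_eq0 | by rewrite mxE].
    * by move=> Z0; split => [j _|]; [rewrite mxE | done].
  + split.
    * case=> H _; apply: NNPP => nZ; have := H j nZ.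
      by rewrite mxE !eqxx /= => /eqP; rewrite oner_eq0.
    * move=> Zj; split.
      - move=> i nZ; rewrite mxE eqxx /=; case: eqP => [E|_] //.
        by rewrite E in nZ.
      - move=> _; rewrite (bigD1 j) //= mxE !eqxx /= big1 ?addr0 // => i /negbTE.
        by rewrite mxE eq_sym => ->.
Qed.

End Val.

Unset Implicit Arguments.
Local Close Scope ring_scope.

Theorem theorem4p8 (K : fieldType) (G : zmodType) (le : rel G)
    (hG : ordered_group le) (nu : K -> option G) (hnu : is_valuation le nu)
    (d : nat) (hd : (1 <= d)%N) :
  VC_dim_eq (Conv le nu d) d.+1 /\
  (exists Y : seq 'rV[K]_d, uniq Y /\ size Y = d.+1 /\ shatters (Conv le nu d) Y) /\
  (forall Y : seq 'rV[K]_d, uniq Y -> size Y = d.+2 -> ~ shatters (Conv le nu d) Y).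
Proof.
split; [split|split].
- exact: lower.
- move=> Y uY Hs; rewrite leqNgt; apply/negP => H.
  exact: (upper hG hnu uY H Hs).
- exact: lower.
- move=> Y uY Hs; apply: (upper hG hnu uY); by rewrite Hs.
Qed.
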